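(* Let $q$ be a power of a prime $p$, let $k$ be an algebraically closed field of characteristic $p$, let $G=\mathrm{GL}_n(k)$ and $\mathfrak{g}=\mathfrak{gl}_n(k)$. Let $F:G\to G$ be the Frobenius endomorphism $F((g_{i,j}))=\big((g^q_{n+1-j,\,n+1-i})\big)^{-1}$ (the inverse of the matrix whose $(i,j)$ entry is $g_{n+1-j,n+1-i}^q$), and let $F:\mathfrak{g}\to\mathfrak{g}$ be given by $F((x_{i,j}))=(x^q_{n+1-j,\,n+1-i})$. Let $\alpha\in\mathbb{F}_{q^2}\setminus\mathbb{F}_q$ (viewed inside $k$). Then the map $s:G_{\mathrm{uni}}\to\mathfrak{g}_{\mathrm{nil}}$, $s(g)=(g-1)(\alpha-\alpha^q g)^{-1}$, is a $G$-equivariant (for conjugation on $G_{\mathrm{uni}}$ and the adjoint action on $\mathfrak{g}_{\mathrm{nil}}$) bijective morphism of varieties, with inverse $s^{-1}(x)=(1+\alpha^q x)^{-1}(\alpha x+1)$, and it satisfies $s(F(g))=F(s(g))$ for all $g\in G_{\mathrm{uni}}$.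
   Context: $G_{\mathrm{uni}}$ denotes the variety of unipotent elements of $G$ and $\mathfrak{g}_{\mathrm{nil}}$ the variety of nilpotent elements of $\mathfrak{g}$. *)

(* Defs.v *)
From HB Require Import structures.
From mathcomp Require Import all_boot all_order all_algebra.
Set Implicit Arguments. Unset Strict Implicit. Unset Printing Implicit Defensive.
Import GRing.Theory.
Local Open Scope ring_scope.

Definition mx_nilpotent (R : pzRingType) (n : nat) (x : 'M[R]_n) : Prop :=
  exists m : nat, x ^+ m = 0.

Definition mx_unipotent (R : comUnitRingType) (n : nat) (g : 'M[R]_n) : Prop :=
  g \in unitmx /\ mx_nilpotent (g - 1%:M).

Definition frob_lie (R : pzRingType) (n q : nat) (x : 'M[R]_n) : 'M[R]_n :=
  \matrix_(i, j) (x (rev_ord j) (rev_ord i)) ^+ q.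

Definition frob_grp (R : comUnitRingType) (n q : nat) (g : 'M[R]_n) : 'M[R]_n :=
  invmx (frob_lie q g).

Definition s_map (R : comUnitRingType) (n q : nat) (alpha : R) (g : 'M[R]_n)
  : 'M[R]_n :=
  (g - 1%:M) *m invmx (alpha%:M - (alpha ^+ q) *: g).

Definition s_inv (R : comUnitRingType) (n q : nat) (alpha : R) (x : 'M[R]_n)
  : 'M[R]_n :=
  invmx (1%:M + (alpha ^+ q) *: x) *m (alpha *: x + 1%:M).

(* Polynomial functions in the matrix entries: the regular functions on
   affine space M_n(k); a map defined on a closed subvariety V is a morphism
   iff its coordinates agree on V with such polynomial functions. *)
Inductive polyfun (R : pzRingType) (n : nat) : ('M[R]_n -> R) -> Prop :=
| pf_const (c : R) : polyfun (fun _ => c)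
| pf_coord (i j : 'I_n) : polyfun (fun x => x i j)
| pf_add f g : polyfun f -> polyfun g -> polyfun (fun x => f x + g x)
| pf_mul f g : polyfun f -> polyfun g -> polyfun (fun x => f x * g x).

(* Main.v *)
Require Import Defs.
From HB Require Import structures.
From mathcomp Require Import all_boot all_order all_algebra ring.
From Stdlib Require Import FunctionalExtensionality.
Import GRing.Theory.
Local Open Scope ring_scope.

Lemma nilp_bound (F : fieldType) (n : nat) (N : 'M[F]_n) :
  mx_nilpotent N -> N ^+ n = 0.
Proof.
case: n N => [|n'] N [m Nm]; first by apply/matrixP => -[].
have : horner_mx N (('X - 0%:P) ^+ m) = 0 by rewrite subr0 rmorphXn /= horner_mx_X.
move/mxminpoly_min/dvdp_exp_XsubCP => [d ledm].
rewrite eqp_monic ?mxminpoly_monic ?monicXsubC ?monic_exp ?monicXsubC //.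
move/eqP => Emin.
have hd : (d <= n'.+1)%N.
  have := dvdp_leq (monic_neq0 (char_poly_monic N)) (mxminpoly_dvd_char N).
  by rewrite Emin size_char_poly subr0 size_polyXn.
have := mx_root_minpoly N; rewrite Emin subr0 rmorphXn /= horner_mx_X => Nd.
rewrite (_ : N ^+ n'.+1 = N ^+ (n'.+1 - d) * N ^+ d); first by rewrite Nd mulr0.
by rewrite -exprD subnK.
Qed.
Section M.
Variables (F : fieldType) (n : nat).
Implicit Types A B M N : 'M[F]_n.

Lemma inv_uniq A B : A *m B = 1%:M -> invmx A = B.
Proof.
move=> AB; have [Au _] := mulmx1_unit AB.
by rewrite -[invmx A]mulmx1 -AB mulmxA mulVmx // mul1mx.
Qed.

Lemma nil_inv N m : N ^+ m = 0 -> (1 - N) \in unitmx /\ invmx (1 - N) = \sum_(i < m) N ^+ i.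
Proof.
move=> Nm.
have H : (1 - N) *m (\sum_(i < m) N ^+ i) = 1%:M.
  have := subrX1 N m; rewrite Nm sub0r => E.
  by rewrite mulmxE -opprB mulNr -E opprK.
by split; [case: (mulmx1_unit H) | exact: inv_uniq].
Qed.

Lemma comm_inv N M : GRing.comm N M -> M \in unitmx -> GRing.comm N (invmx M).
Proof.
move=> c Mu; rewrite /GRing.comm.
have e1 : invmx M * N = invmx M * N * (M * invmx M) by rewrite -mulmxE (mulmxV Mu) mulmxE mulr1.
rewrite e1 mulrA -(mulrA _ N M) c mulrA.
have e2 : invmx M * M = 1 by rewrite -mulmxE (mulVmx Mu).
by rewrite e2 mul1r.
Qed.
Lemma expZ (a : F) N m : (a *: N) ^+ m = a ^+ m *: N ^+ m.
Proof.
elim: m => [|m IH]; first by rewrite !expr0 scale1r.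
by rewrite !exprS -!mulmxE IH -scalemxAl -scalemxAr scalerA.
Qed.

Lemma unit_nil N m c d : N ^+ m = 0 -> c != 0 ->
  (c%:M + d *: N) \in unitmx /\
  invmx (c%:M + d *: N) = c^-1 *: \sum_(i < m) (- (d / c) *: N) ^+ i.
Proof.
move=> Nm c0.
have Xm : (- (d / c) *: N) ^+ m = 0 by rewrite expZ Nm scaler0.
have [u iu] := nil_inv _ _ Xm.
have E : c%:M + d *: N = c *: (1 - (- (d / c) *: N)).
  apply/matrixP => i j; rewrite !mxE; field; exact: c0.
have cu : c \is a GRing.unit by rewrite unitfE.
rewrite E unitmxZ // invmxZ ?unitmxZ // iu; by split.
Qed.

Lemma comm_lin N c d : GRing.comm N (c%:M + d *: N).
Proof.
rewrite /GRing.comm mulrDr mulrDl -!mulmxE scalar_mxC.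
by rewrite -scalemxAr -scalemxAl.
Qed.

Lemma invmxM A B : A \in unitmx -> B \in unitmx -> invmx (A *m B) = invmx B *m invmx A.
Proof.
move=> Au Bu; apply: inv_uniq.
by rewrite mulmxA -(mulmxA A) mulmxV // mulmx1 mulmxV.
Qed.
End M.
Section Frob.
Variables (F : fieldType) (n q : nat).
Hypothesis hq : [pchar F].-nat q.
Hypothesis q0 : (0 < q)%N.
Local Notation Fl := (@frob_lie F n q).

Lemma frD (x y : F) : (x + y) ^+ q = x ^+ q + y ^+ q.
Proof. exact: exprDn_pchar. Qed.
Lemma fr0 : (0 : F) ^+ q = 0.
Proof. by rewrite expr0n; case: q q0. Qed.
Lemma frN (x : F) : (- x) ^+ q = - x ^+ q.
Proof. exact: exprNn_pchar. Qed.

Lemma FlD A B : Fl (A + B) = Fl A + Fl B.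
Proof. by apply/matrixP => i j; rewrite !mxE frD. Qed.
Lemma FlN A : Fl (- A) = - Fl A.
Proof. by apply/matrixP => i j; rewrite !mxE frN. Qed.
Lemma FlB A B : Fl (A - B) = Fl A - Fl B.
Proof. by rewrite FlD FlN. Qed.
Lemma Fl0 : Fl 0 = 0.
Proof. by apply/matrixP => i j; rewrite !mxE fr0. Qed.
Lemma FlZ c A : Fl (c *: A) = c ^+ q *: Fl A.
Proof. by apply/matrixP => i j; rewrite !mxE exprMn. Qed.
Lemma Flsc c : Fl c%:M = (c ^+ q)%:M.
Proof.
apply/matrixP => i j; rewrite !mxE (inj_eq rev_ord_inj) eq_sym.
by case: (i == j); rewrite ?mulr1n ?mulr0n ?fr0.
Qed.
Lemma Fl1 : Fl 1%:M = 1%:M.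
Proof. by rewrite Flsc expr1n. Qed.
Lemma FlM A B : Fl (A *m B) = Fl B *m Fl A.
Proof.
apply/matrixP => i j; rewrite !mxE.
rewrite (big_morph (fun x : F => x ^+ q) frD fr0).
rewrite (reindex_inj rev_ord_inj) /=; apply: eq_bigr => l _.
by rewrite !mxE exprMn mulrC.
Qed.
Lemma FlX A m : Fl (A ^+ m) = Fl A ^+ m.
Proof.
elim: m => [|m IH]; first by rewrite !expr0 Fl1.
by rewrite exprS -mulmxE FlM IH mulmxE -exprSr.
Qed.
Lemma Flinv A : A \in unitmx -> Fl (invmx A) = invmx (Fl A) /\ Fl A \in unitmx.
Proof.
move=> Au.
have H : Fl A *m Fl (invmx A) = 1%:M by rewrite -FlM mulVmx // Fl1.
have [u _] := mulmx1_unit H; split=> //.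
by rewrite -[LHS]mul1mx -(mulVmx u) -mulmxA H mulmx1.
Qed.
End Frob.
Section PF.
Variables (R : comNzRingType) (n : nat).
Definition PF (T : 'M[R]_n -> 'M[R]_n) := forall i j, polyfun (fun x => T x i j).

Lemma pf_ext {f g : 'M[R]_n -> R} : (forall x, f x = g x) -> polyfun f -> @polyfun R n g.
Proof. by move=> e; rewrite (functional_extensionality _ _ e). Qed.

Lemma pf_sum (I : Type) (r : seq I) (P : pred I) (f : I -> 'M[R]_n -> R) :
  (forall l, polyfun (f l)) -> polyfun (fun x => \sum_(l <- r | P l) f l x).
Proof.
move=> H; elim: r => [|a r IH].
  by apply: (pf_ext (f := fun _ => 0)) => [x|]; [rewrite big_nil | exact: pf_const].
case Pa: (P a).
  apply: (pf_ext (f := fun x => f a x + \sum_(l <- r | P l) f l x)) => [x|].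
    by rewrite big_cons Pa.
  exact: pf_add.
by apply: (pf_ext _ IH) => x; rewrite big_cons Pa.
Qed.

Lemma PF_id : PF id. Proof. by move=> i j; exact: pf_coord. Qed.
Lemma PF_const C : PF (fun _ => C). Proof. by move=> i j; exact: pf_const. Qed.
Lemma PF_add T1 T2 : PF T1 -> PF T2 -> PF (fun x => T1 x + T2 x).
Proof. move=> h1 h2 i j; apply: (pf_ext (f := fun x => T1 x i j + T2 x i j)) => [x|]; [by rewrite mxE|exact: pf_add]. Qed.
Lemma PF_scale c T : PF T -> PF (fun x => c *: T x).
Proof. move=> h i j; apply: (pf_ext (f := fun x => c * T x i j)) => [x|]; [by rewrite mxE|exact: pf_mul (pf_const _ _) _]. Qed.
Lemma PF_mul T1 T2 : PF T1 -> PF T2 -> PF (fun x => T1 x *m T2 x).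
Proof.
move=> h1 h2 i j.
apply: (pf_ext (f := fun x => \sum_(l < n) T1 x i l * T2 x l j)) => [x|]; first by rewrite mxE.
by apply: pf_sum => l; apply: pf_mul.
Qed.
Lemma PF_exp T m : PF T -> PF (fun x => T x ^+ m).
Proof.
move=> h; elim: m => [|m IH]; first exact: PF_const.
move=> i j; apply: (pf_ext (f := fun x => (T x *m T x ^+ m) i j)) => [x|]; first by rewrite exprS mulmxE.
exact: PF_mul.
Qed.
Lemma PF_sum m (T : 'I_m -> 'M[R]_n -> 'M[R]_n) : (forall l, PF (T l)) -> PF (fun x => \sum_(l < m) T l x).
Proof.
move=> h i j.
apply: (pf_ext _ (@pf_sum _ (index_enum 'I_m) xpredT (fun l x => T l x i j) (fun l => h l i j))) => x.
by rewrite summxE.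
Qed.
End PF.


Lemma commZ (F : fieldType) n (a : F) (N M : 'M[F]_n) : GRing.comm N M -> GRing.comm (a *: N) M.
Proof.
rewrite /GRing.comm -!mulmxE => c.
by rewrite -scalemxAl c scalemxAr.
Qed.

Theorem mainTheorem2
  (k : closedFieldType) (p : nat) (hp : prime p) (hchar : p \in [pchar k])
  (e : nat) (he : (0 < e)%N) (n : nat) (alpha : k)
  (ha2 : alpha ^+ ((p ^ e) ^ 2) = alpha) (haq : alpha ^+ (p ^ e) != alpha) :
  let q := (p ^ e)%N in
  let s := @s_map k n q alpha in
  let sinv := @s_inv k n q alpha in
  (* s is well defined on G_uni and sinv on g_nil *)
  (forall g : 'M[k]_n, mx_unipotent g ->
      alpha%:M - (alpha ^+ q) *: g \in unitmx) /\
  (forall x : 'M[k]_n, mx_nilpotent x ->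
      1%:M + (alpha ^+ q) *: x \in unitmx) /\
  (* s maps G_uni to g_nil, sinv maps g_nil to G_uni, mutually inverse *)
  (forall g : 'M[k]_n, mx_unipotent g -> mx_nilpotent (s g)) /\
  (forall x : 'M[k]_n, mx_nilpotent x -> mx_unipotent (sinv x)) /\
  (forall g : 'M[k]_n, mx_unipotent g -> sinv (s g) = g) /\
  (forall x : 'M[k]_n, mx_nilpotent x -> s (sinv x) = x) /\
  (* G-equivariance *)
  (forall h g : 'M[k]_n, h \in unitmx -> mx_unipotent g ->
      s (h *m g *m invmx h) = h *m s g *m invmx h) /\
  (* s is a morphism of varieties *)
  (exists f : 'I_n -> 'I_n -> ('M[k]_n -> k),
      (forall i j, polyfun (f i j)) /\
      (forall g : 'M[k]_n, mx_unipotent g -> forall i j, s g i j = f i j g)) /\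
  (* compatibility with Frobenius *)
  (forall g : 'M[k]_n, mx_unipotent g -> s (frob_grp q g) = frob_lie q (s g)).
Proof.
move=> q s sinv; rewrite /s /sinv /s_map /s_inv {s sinv}.
have hq : [pchar k].-nat q by rewrite /q pnatX (pnatE _ hp) hchar.
have q0 : (0 < q)%N by rewrite /q expn_gt0 prime_gt0.
set b := alpha ^+ q.
set c := alpha - b.
have hc : c != 0 by rewrite /c subr_eq0 eq_sym.
have cu : c \is a GRing.unit by rewrite unitfE.
have hbq : b ^+ q = alpha by rewrite /b -exprM mulnn.
have Mdec : forall g : 'M[k]_n, alpha%:M - b *: g = c%:M + (- b) *: (g - 1%:M).
  by move=> g; apply/matrixP => i j; rewrite !mxE /c; ring.
have Mu : forall g : 'M[k]_n, mx_unipotent g ->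
   alpha%:M - b *: g \in unitmx /\
   invmx (alpha%:M - b *: g) = c^-1 *: \sum_(i < n) (- (- b / c) *: (g - 1%:M)) ^+ i.
  move=> g [_ Nn]; rewrite Mdec; exact: (unit_nil _ _ _ _ _ _ (nilp_bound _ _ _ Nn) hc).
have Pu : forall x : 'M[k]_n, mx_nilpotent x -> forall d, 1%:M + d *: x \in unitmx.
  by move=> x xn d; case: (unit_nil _ _ _ _ 1 d (nilp_bound _ _ _ xn) (oner_neq0 k)).
have Pun : forall x : 'M[k]_n, mx_nilpotent x -> 1%:M + b *: x \in unitmx by move=> x xn; apply: Pu.
have cN : forall g : 'M[k]_n, GRing.comm (g - 1%:M) (alpha%:M - b *: g).
  by move=> g; rewrite Mdec; apply: comm_lin.
have cg : forall g : 'M[k]_n, GRing.comm g (alpha%:M - b *: g).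
  by move=> g; rewrite -scaleNr; apply: comm_lin.
have E3 : forall x : 'M[k]_n, mx_nilpotent x ->
    invmx (1%:M + b *: x) *m (alpha *: x + 1%:M) - 1%:M = invmx (1%:M + b *: x) *m (c *: x).
  move=> x xn; rewrite -[X in _ - X](mulVmx (Pun x xn)) -mulmxBr; congr (_ *m _).
  by apply/matrixP => i j; rewrite !mxE /c; ring.
have cP : forall x : 'M[k]_n, GRing.comm x (1%:M + b *: x) by move=> x; apply: comm_lin.
split; first by move=> g gu; case: (Mu g gu).
split; first by move=> x xn; apply: Pun.
split.
  move=> g gu; have [Mun _] := Mu g gu; case: gu => _ [m Nm]; exists m.
  rewrite mulmxE exprMn_comm; first by rewrite Nm mul0r.
  exact: (comm_inv _ _ _ _ (cN g) Mun).
split.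
  move=> x xn; split.
    by rewrite unitmx_mul unitmx_inv Pun // addrC Pu.
  case: xn => m xm; exists m.
  rewrite E3; last by exists m.
  rewrite mulmxE exprMn_comm; first by rewrite expZ xm scaler0 mulr0.
  have Pu' := Pun x (ex_intro _ m xm).
  have c1 := comm_inv _ _ _ _ (cP x) Pu'.
  have c2 := commZ _ _ c _ _ c1.
  exact: esym c2.
split.
  move=> g gu; have [Mun _] := Mu g gu.
  set M := alpha%:M - b *: g.
  have E1 : 1%:M + b *: ((g - 1%:M) *m invmx M) = c *: invmx M.
    rewrite -[X in X + _](mulmxV Mun) scalemxAl -mulmxDl -[c *: _]mul_scalar_mx; congr (_ *m _).
    by apply/matrixP => i j; rewrite /M !mxE /c; ring.
  have E2 : alpha *: ((g - 1%:M) *m invmx M) + 1%:M = (c *: g) *m invmx M.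
    rewrite -[X in _ + X](mulmxV Mun) scalemxAl -mulmxDl; congr (_ *m _).
    by apply/matrixP => i j; rewrite /M !mxE /c; ring.
  rewrite E1 E2 invmxZ ?unitmxZ ?unitmx_inv // invmxK.
  rewrite -scalemxAl -scalemxAl -scalemxAr scalerA mulVf // scale1r.
  have cgm : M *m g = g *m M := esym (cg g).
  by rewrite mulmxA cgm -mulmxA mulmxV // mulmx1.
split.
  move=> x xn; have Pu' := Pun x xn.
  set P := 1%:M + b *: x.
  rewrite E3 //.
  have E4 : alpha%:M - b *: (invmx P *m (alpha *: x + 1%:M)) = c *: invmx P.
    have -> : alpha%:M - b *: (invmx P *m (alpha *: x + 1%:M)) =
              invmx P *m (alpha *: P - b *: (alpha *: x + 1%:M)).
      by rewrite mulmxBr -!scalemxAr mulVmx // scalemx1.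
    rewrite -[c *: invmx P]mul_mx_scalar; congr (_ *m _).
    by apply/matrixP => i j; rewrite /P !mxE /c; ring.
  rewrite E4 invmxZ ?unitmxZ ?unitmx_inv // invmxK.
  rewrite -/P -scalemxAr -scalemxAr -scalemxAl scalerA mulVf // scale1r.
  have cxP : x *m P = P *m x := cP x.
  by rewrite -mulmxA cxP mulmxA mulVmx // mul1mx.
split.
  move=> h g hu gu; have [Mun _] := Mu g gu.
  set M := alpha%:M - b *: g.
  have hiu : invmx h \in unitmx by rewrite unitmx_inv.
  have E5 : h *m g *m invmx h - 1%:M = h *m (g - 1%:M) *m invmx h.
    by rewrite mulmxBr mulmxBl mulmx1 mulmxV.
  have E6 : alpha%:M - b *: (h *m g *m invmx h) = h *m M *m invmx h.
    rewrite /M mulmxBr mulmxBl mul_mx_scalar -scalemxAl mulmxV // scalemx1.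
    by rewrite -scalemxAr -scalemxAl.
  have hMu : h *m M \in unitmx by rewrite unitmx_mul hu.
  rewrite E5 E6 invmxM // invmxK invmxM //.
  by rewrite !mulmxA -(mulmxA (h *m _) (invmx h) h) mulVmx // mulmx1.
split.
  pose T := fun x : 'M[k]_n => (x - 1%:M) *m (c^-1 *: \sum_(l < n) (- (- b / c) *: (x - 1%:M)) ^+ l).
  exists (fun i j x => T x i j); split.
    have H1 : PF k n (fun x : 'M[k]_n => x - 1%:M).
      exact: (PF_add _ _ _ _ (PF_id _ _) (PF_const _ _ _)).
    apply: (PF_mul _ _ _ _ H1).
    apply: PF_scale; apply: PF_sum => l.
    apply: PF_exp; apply: PF_scale; exact: H1.
  by move=> g gu i j; have [_ ->] := Mu g gu.
move=> g gu; have [Mun _] := Mu g gu.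
have gun : g \in unitmx by case: gu.
set M := alpha%:M - b *: g.
set h := frob_lie q g.
have [_ hu] := Flinv _ _ _ hq q0 g gun.
have [FMi Ku] := Flinv _ _ _ hq q0 M Mun.
have FM : frob_lie q M = b%:M - alpha *: h.
  by rewrite /M (FlB _ _ _ hq) (Flsc _ _ _ q0) (FlZ _ _ _) hbq.
rewrite (FlM _ _ _ hq q0) FMi -/M FM (FlB _ _ _ hq) (Fl1 _ _ _ q0) -/h.
rewrite /frob_grp -/h.
set K := b%:M - alpha *: h.
have Gu : invmx h \in unitmx by rewrite unitmx_inv.
have KKu : K \in unitmx by rewrite /K -FM.
have E7 : alpha%:M - b *: invmx h = (-1) *: (invmx h *m K).
  by rewrite scaleN1r /K mulmxBr mul_mx_scalar -scalemxAr mulVmx // scalemx1 opprB.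
rewrite E7 invmxZ; last by rewrite unitmxZ ?unitmx_mul ?Gu // unitrN1.
rewrite invmxM // invmxK invrN1 -scalemxAr scaleN1r.
have cK : GRing.comm h K by rewrite /K -scaleNr; apply: comm_lin.
have ch := comm_inv _ _ _ _ cK KKu.
have hG : invmx h * h = 1 by rewrite -mulmxE mulVmx.
rewrite !mulmxE -ch mulrA mulrBl hG mul1r -mulNr opprB.
apply: esym; apply: commrB; [exact: (commr_sym ch) | exact: commr1].
Qed.
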